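(* Let $P(q)=\sum_{j=0}^n q^ja_j$ be a slice regular polynomial of degree $n\ge1$ with quaternionic coefficients such that $P(1)=\|P\|=1$, where $\|P\|=\max_{|q|\le1}|P(q)|$, and suppose there is a real number $\delta>1$ such that $$\max_{|q|=R}|P(q)|\leq\frac{1+R^{n}}{2}\qquad\text{for all }1<R<\delta.$$ Then $P$ does not have all its zeros within the open unit ball $\mathbb B=\{q\in\mathbb H:|q|<1\}$, i.e. $P$ has a zero $q_0$ with $|q_0|\ge1$.
   Context: $\mathbb H$ denotes the quaternions with modulus $|q|=\sqrt{q\bar q}$. A slice regular polynomial of degree $n$ is a function $q\mapsto\sum_{j=0}^n q^ja_j$ with coefficients $a_j\in\mathbb H$ on the right and $a_n\neq0$; its zeros are the points $q\in\mathbb H$ with $P(q)=0$. *)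

(* Defs.v *)
From HB Require Import structures.
From mathcomp Require Import all_boot all_order all_algebra.
From mathcomp Require Import reals.
Set Implicit Arguments. Unset Strict Implicit. Unset Printing Implicit Defensive.
Import Order.TTheory GRing.Theory Num.Theory.
Local Open Scope ring_scope.

Record quat (R : realType) := Quat { qre : R; qi : R; qj : R; qk : R }.

Section Quat.
Variable R : realType.

Definition qzero : quat R := Quat 0 0 0 0.
Definition qone : quat R := Quat 1 0 0 0.

Definition qadd (p q : quat R) : quat R :=
  Quat (qre p + qre q) (qi p + qi q) (qj p + qj q) (qk p + qk q).

Definition qmul (p q : quat R) : quat R :=
  Quat (qre p * qre q - qi p * qi q - qj p * qj q - qk p * qk q)
       (qre p * qi q + qi p * qre q + qj p * qk q - qk p * qj q)
       (qre p * qj q - qi p * qk q + qj p * qre q + qk p * qi q)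
       (qre p * qk q + qi p * qj q - qj p * qi q + qk p * qre q).

Definition qnorm (q : quat R) : R :=
  Num.sqrt (qre q ^+ 2 + qi q ^+ 2 + qj q ^+ 2 + qk q ^+ 2).

Definition qpow (q : quat R) (j : nat) : quat R := iter j (qmul q) qone.

Definition slice_eval (n : nat) (a : nat -> quat R) (q : quat R) : quat R :=
  \big[qadd/qzero]_(j < n.+1) qmul (qpow q j) (a j).

End Quat.

(* Main.v *)
Require Import Defs.
From mathcomp Require Import all_boot all_order all_algebra.
From mathcomp Require Import reals.
From mathcomp.real_closed Require Import complex polyrcf.
From mathcomp Require Import ring lra zify.
Import Order.TTheory GRing.Theory Num.Theory.
Local Open Scope ring_scope.
Set Implicit Arguments. Unset Strict Implicit. Unset Printing Implicit Defensive.

Section B.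
Variable R : rcfType.
Local Notation C := R[i].
Local Notation Re := (@complex.Re R).
Local Notation Im := (@complex.Im R).

Definition nsq (x : C) : R := Re x ^+ 2 + Im x ^+ 2.
Definition Kq (p : {poly C}) : R := Re (p^`().[1] * (p.[1])^*%C).

Lemma Re_mulJ (x y : C) : Re (x * y^*%C) = Re x * Re y + Im x * Im y.
Proof. case: x => a b; case: y => c d /=. ring. Qed.

Lemma nsq_mul (x y : C) : nsq (x * y) = nsq x * nsq y.
Proof. case: x => a b; case: y => c d; rewrite /nsq /=. ring. Qed.

Lemma nsq_eq0 (x : C) : nsq x = 0 -> x = 0.
Proof. case: x => a b; rewrite /nsq /= => h.
have ha : a = 0 by apply/eqP; rewrite -sqrf_eq0; apply/eqP; nra.
have hb : b = 0 by apply/eqP; rewrite -sqrf_eq0; apply/eqP; nra.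
by rewrite ha hb.
Qed.

Lemma ltc1_nsq (z : C) : `|z| < 1 -> nsq z < 1.
Proof.
rewrite normc_def -[1]/(1%:C)%C ltcR /nsq => h.
have h0 : 0 <= Re z ^+ 2 + Im z ^+ 2 by nra.
have h1 := sqr_sqrtr h0; have h2 := sqrtr_ge0 (Re z ^+ 2 + Im z ^+ 2).
rewrite -h1; nra.
Qed.

Lemma Re_mul (x y : C) : Re (x * y) = Re x * Re y - Im x * Im y.
Proof. by case: x => a b; case: y => c d /=. Qed.
Lemma Im_mul (x y : C) : Im (x * y) = Re x * Im y + Im x * Re y.
Proof. by case: x => a b; case: y => c d /=. Qed.
Lemma Re_add (x y : C) : Re (x + y) = Re x + Re y.
Proof. by case: x => a b; case: y => c d /=. Qed.
Lemma Im_add (x y : C) : Im (x + y) = Im x + Im y.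
Proof. by case: x => a b; case: y => c d /=. Qed.

Lemma step (q0 : {poly C}) (z : C) (m : R) :
  `|z| < 1 -> 2 * Kq q0 >= m * nsq q0.[1] ->
  2 * Kq (('X - z%:P) * q0) - (m + 1) * nsq (('X - z%:P) * q0).[1]
    >= (1 - nsq z) * nsq q0.[1].
Proof.
move=> /ltc1_nsq hz; rewrite /Kq derivM derivXsubC mul1r !hornerE.
move: hz; rewrite /nsq.
set f := q0.[1]; set g := q0^`().[1].
rewrite !(Re_mulJ, Re_add, Im_add, Re_mul, Im_mul) /=.
case: z => z1 z2; case: f => f1 f2; case: g => g1 g2 /= _ H.
rewrite -subr_ge0.
set D := 2 * (g1 * f1 + g2 * f2) - m * (f1 ^+ 2 + f2 ^+ 2).
have hD : 0 <= D by rewrite /D subr_ge0.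
have hw : 0 <= (1 - z1) ^+ 2 + z2 ^+ 2 by rewrite addr_ge0 ?sqr_ge0.
set E := (X in 0 <= X).
have -> : E = ((1 - z1) ^+ 2 + z2 ^+ 2) * D by rewrite /E /D; ring.
exact: mulr_ge0.
Qed.




Lemma nsq_ge0 (x : C) : 0 <= nsq x.
Proof. by rewrite /nsq addr_ge0 ?sqr_ge0. Qed.

Lemma nsq_gt0 (x : C) : x != 0 -> 0 < nsq x.
Proof.
move=> hx; rewrite lt_def nsq_ge0 andbT; apply/eqP => /nsq_eq0 h.
by rewrite h eqxx in hx.
Qed.

Lemma prod_ind (r : seq C) : all (fun z => `|z| < 1) r ->
  let Q := \prod_(z <- r) ('X - z%:P) in
  (size r)%:R * nsq Q.[1] <= 2 * Kq Q /\ Q.[1] != 0.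
Proof.
elim: r => [|z r IH] /=.
  by rewrite big_nil /Kq derivC !hornerE /= => _; rewrite lexx oner_eq0.
move=> /andP [hz hr]; have [IH1 IH2] := IH hr.
rewrite big_cons; split.
  have := step hz IH1; rewrite -mulrSr.
  have h0 : 0 <= 1 - nsq z by rewrite subr_ge0 ltW // ltc1_nsq.
  have h1 := mulr_ge0 h0 (nsq_ge0 (\prod_(j <- r) ('X - j%:P)).[1]).
  move=> h2; rewrite -subr_ge0; exact: le_trans h1 h2.
rewrite hornerM mulf_neq0 // !hornerE subr_eq0.
apply/eqP => h; move: hz; rewrite -h normr1 ltxx //.
Qed.


Lemma KqZ (c : C) (Q : {poly C}) : Kq (c *: Q) = nsq c * Kq Q.
Proof.
rewrite /Kq derivZ !hornerZ.
case: c => c1 c2; case: (Q^`().[1]) => a b; case: (Q.[1]) => d e.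
rewrite /nsq /=; ring.
Qed.

Lemma hornerZ1 (c : C) (Q : {poly C}) : nsq (c *: Q).[1] = nsq c * nsq Q.[1].
Proof. by rewrite hornerZ nsq_mul. Qed.

Lemma rootsB (p : {poly C}) : (1 < size p)%N ->
  (forall z, root p z -> `|z| < 1) ->
  (size p).-1%:R * nsq p.[1] < 2 * Kq p.
Proof.
move=> hs hr; have [r hp] := closed_field_poly_normal p.
have p0 : p != 0 by rewrite -size_poly_gt0 (ltn_trans _ hs).
have hc : lead_coef p != 0 by rewrite lead_coef_eq0.
have hsz : size p = (size r).+1.
  by rewrite {1}hp size_scale // size_prod_XsubC.
have hall : all (fun z => `|z| < 1) r.
  apply/allP => z zr; apply: hr; rewrite hp rootZ // root_prod_XsubC //.
rewrite hsz /=; rewrite hp KqZ hornerZ1.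
move: hall; case: r hp hsz => [|z r] hp hsz; first by rewrite hsz in hs.
move=> /= /andP [hz hall].
have [IH1 IH2] := prod_ind hall.
rewrite big_cons.
have := step hz IH1.
have h0 : 0 < 1 - nsq z by rewrite subr_gt0 ltc1_nsq.
have h1 := mulr_gt0 h0 (nsq_gt0 IH2).
have hc2 := nsq_gt0 hc.
move=> h2; rewrite -natr1 mulrCA [2 * _]mulrCA -subr_gt0 -mulrBr mulr_gt0 //.
exact: lt_le_trans h1 h2.
Qed.

End B.

Section Cpart.
Variable R : rcfType.

Lemma deriv_bound (S : {poly R}) (n : nat) (delta : R) :
  1 < delta -> S.[1] = 1 ->
  (forall t, 1 < t -> t < delta -> S.[t] <= ((1 + t ^+ n) / 2) ^+ 2) ->
  S^`().[1] <= n%:R.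
Proof.
move=> hd hS1 hS.
have : root (S - 1) 1 by rewrite /root !hornerE hS1 subrr.
case/factor_theorem => G hG.
have hSd : S^`().[1] = G.[1].
  have -> : S = G * ('X - 1%:P) + 1 by rewrite -hG subrK.
  by rewrite derivD derivC addr0 derivM derivXsubC mulr1 !hornerE subrr !mulr0 add0r.
rewrite hSd; rewrite leNgt; apply/negP => hG1.
set H : {poly R} := (\sum_(k < n) 'X^k) * ('X^n + 3%:P) * (4^-1)%:P.
have hH : forall t, H.[t] = (\sum_(k < n) t ^+ k) * (t ^+ n + 3) / 4.
  by move=> t; rewrite /H !hornerE horner_sum; congr (_ * _ * _);
     apply: eq_bigr => k _; rewrite hornerXn.
have hH1 : H.[1] = n%:R.
  rewrite hH (eq_bigr (fun _ => 1)) ?sumr_const ?card_ord; last by move=> k _; rewrite expr1n.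
  rewrite expr1n; have h4 : (4 : R) != 0 by rewrite pnatr_eq0.
  by rewrite -[1 + 3]/(4%:R) -mulrA mulfV // mulr1.
set D := G - H.
have hD1 : 0 < D.[1] by rewrite /D hornerD hornerN hH1 subr_gt0.
have [d hd0 hdc] := poly_cont 1 D hD1.
set t := 1 + Num.min d (delta - 1) / 2.
have hm0 : 0 < Num.min d (delta - 1) by rewrite lt_min hd0 subr_gt0 hd.
have ht1 : 1 < t by rewrite /t ltrDl divr_gt0.
have ht2 : t < delta.
  have : Num.min d (delta - 1) <= delta - 1 by rewrite ge_min lexx orbT.
  rewrite /t; lra.
have hDt : 0 < D.[t].
  have : `|t - 1| < d.
    rewrite /t addrAC subrr add0r ger0_norm ?divr_ge0 ?ltW //.
    have : Num.min d (delta - 1) <= d by rewrite ge_min lexx.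
    lra.
  move/hdc => h; move: (ler_norm (D.[1] - D.[t])).
  rewrite distrC in h; lra.
have := hS t ht1 ht2.
have -> : S.[t] = G.[t] * (t - 1) + 1 by rewrite -[S](subrK 1) hG !hornerE.
have : ((1 + t ^+ n) / 2) ^+ 2 = H.[t] * (t - 1) + 1.
  rewrite hH; have e := subrX1 t n; set s := \sum_(k < n) t ^+ k in e *.
  have -> : t ^+ n = (t - 1) * s + 1 by rewrite -e subrK.
  by field.
move=> ->; rewrite lerD2r; move: hDt; rewrite /D hornerD hornerN subr_gt0 => hDt.
rewrite ler_pM2r ?subr_gt0 //; rewrite leNgt hDt //.
Qed.

End Cpart.

Section Q.
Variable R : realType.
Local Notation Re := (@complex.Re R).
Local Notation Im := (@complex.Im R).

Lemma sq0 (x : R) : x ^+ 2 = 0 -> x = 0.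
Proof. by move/eqP; rewrite sqrf_eq0 => /eqP. Qed.

Lemma quat_solve (U0 U1 U2 U3 V0 V1 V2 V3 : R) :
  U0^+2 + U1^+2 + U2^+2 + U3^+2 = V0^+2 + V1^+2 + V2^+2 + V3^+2 ->
  U0 * V0 + U1 * V1 + U2 * V2 + U3 * V3 = 0 ->
  exists I1 I2 I3 : R, I1^+2 + I2^+2 + I3^+2 = 1 /\
    U0 - (I1 * V1 + I2 * V2 + I3 * V3) = 0 /\
    U1 + (I1 * V0 + I2 * V3 - I3 * V2) = 0 /\
    U2 + (- (I1 * V3) + I2 * V0 + I3 * V1) = 0 /\
    U3 + (I1 * V2 - I2 * V1 + I3 * V0) = 0.
Proof.
move=> hN hr.
set N := V0^+2 + V1^+2 + V2^+2 + V3^+2 in hN.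
have [N0|Nn0] := eqVneq N 0.
  move: N0 hN; rewrite /N => N0 hN.
  have := sqr_ge0 V0; have := sqr_ge0 V1; have := sqr_ge0 V2; have := sqr_ge0 V3.
  have := sqr_ge0 U0; have := sqr_ge0 U1; have := sqr_ge0 U2; have := sqr_ge0 U3.
  move=> *.
  have hV0 : V0 = 0 by apply: sq0; lra.
  have hV1 : V1 = 0 by apply: sq0; lra.
  have hV2 : V2 = 0 by apply: sq0; lra.
  have hV3 : V3 = 0 by apply: sq0; lra.
  have hU0 : U0 = 0 by apply: sq0; lra.
  have hU1 : U1 = 0 by apply: sq0; lra.
  have hU2 : U2 = 0 by apply: sq0; lra.
  have hU3 : U3 = 0 by apply: sq0; lra.
  exists 1, 0, 0; rewrite hV0 hV1 hV2 hV3 hU0 hU1 hU2 hU3; split; first by ring.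
  by split; [ring|split; [ring|split; ring]].
pose W1 := - U0 * V1 + U1 * V0 - U2 * V3 + U3 * V2.
pose W2 := - U0 * V2 + U1 * V3 + U2 * V0 - U3 * V1.
pose W3 := - U0 * V3 - U1 * V2 + U2 * V1 + U3 * V0.
exists (- W1 / N), (- W2 / N), (- W3 / N).
set r := U0 * V0 + U1 * V1 + U2 * V2 + U3 * V3 in hr.
split.
  have -> : (- W1 / N) ^+ 2 + (- W2 / N) ^+ 2 + (- W3 / N) ^+ 2 =
     ((U0^+2 + U1^+2 + U2^+2 + U3^+2) * N - r ^+ 2) / N ^+ 2.
    by rewrite /W1 /W2 /W3 /r /N; field.
  by rewrite hN hr expr0n /= subr0 -expr2 divff // expf_neq0.
split; [|split; [|split]].
- have -> : U0 - (- W1 / N * V1 + - W2 / N * V2 + - W3 / N * V3) = r * V0 / N.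
    by rewrite /W1 /W2 /W3 /r /N; field.
  by rewrite hr !mul0r.
- have -> : U1 + (- W1 / N * V0 + - W2 / N * V3 - - W3 / N * V2) = r * V1 / N.
    by rewrite /W1 /W2 /W3 /r /N; field.
  by rewrite hr !mul0r.
- have -> : U2 + (- (- W1 / N * V3) + - W2 / N * V0 + - W3 / N * V1) = r * V2 / N.
    by rewrite /W1 /W2 /W3 /r /N; field.
  by rewrite hr !mul0r.
- have -> : U3 + (- W1 / N * V2 - - W2 / N * V1 + - W3 / N * V0) = r * V3 / N.
    by rewrite /W1 /W2 /W3 /r /N; field.
  by rewrite hr !mul0r.
Qed.


Lemma quatE (q : quat R) : q = Quat (qre q) (qi q) (qj q) (qk q).
Proof. by case: q. Qed.

Lemma qpow_real (t : R) j : qpow (Quat t 0 0 0) j = Quat (t ^+ j) 0 0 0.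
Proof.
elim: j => [|j IH]; first by rewrite /qpow /= expr0.
rewrite /qpow iterS -/(qpow _ j) IH /qmul /= exprS; congr Quat; ring.
Qed.

Lemma qpow_sphere (z : R[i]) (I1 I2 I3 : R) : I1^+2 + I2^+2 + I3^+2 = 1 ->
  forall j, qpow (Quat (Re z) (Im z * I1) (Im z * I2) (Im z * I3)) j =
    Quat (Re (z ^+ j)) (Im (z ^+ j) * I1) (Im (z ^+ j) * I2) (Im (z ^+ j) * I3).
Proof.
move=> hI; elim=> [|j IH]; first by rewrite /qpow /= !mul0r.
rewrite /qpow iterS -/(qpow _ j) IH /qmul /= exprS; clear IH.
case: (z ^+ j) => u v; case: z => x y /=.
congr Quat.
- have -> : x * u - y * I1 * (v * I1) - y * I2 * (v * I2) - y * I3 * (v * I3)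
          = x * u - y * v * (I1^+2 + I2^+2 + I3^+2) by ring.
  by rewrite hI mulr1.
- ring.
- ring.
- ring.
Qed.

Lemma big_qre m (F : 'I_m -> quat R) :
  qre (\big[@qadd R/qzero R]_(j < m) F j) = \sum_(j < m) qre (F j).
Proof. by apply: (big_morph (@qre R)) => //. Qed.
Lemma big_qi m (F : 'I_m -> quat R) :
  qi (\big[@qadd R/qzero R]_(j < m) F j) = \sum_(j < m) qi (F j).
Proof. by apply: (big_morph (@qi R)) => //. Qed.
Lemma big_qj m (F : 'I_m -> quat R) :
  qj (\big[@qadd R/qzero R]_(j < m) F j) = \sum_(j < m) qj (F j).
Proof. by apply: (big_morph (@qj R)) => //. Qed.
Lemma big_qk m (F : 'I_m -> quat R) :
  qk (\big[@qadd R/qzero R]_(j < m) F j) = \sum_(j < m) qk (F j).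
Proof. by apply: (big_morph (@qk R)) => //. Qed.

Lemma sum4 m (c0 c1 c2 c3 : R) (X0 X1 X2 X3 : 'I_m -> R) :
  \sum_(j < m) (c0 * X0 j + c1 * X1 j + c2 * X2 j + c3 * X3 j) =
  c0 * \sum_(j < m) X0 j + c1 * \sum_(j < m) X1 j + c2 * \sum_(j < m) X2 j
  + c3 * \sum_(j < m) X3 j.
Proof. by rewrite !big_split /= !mulr_sumr. Qed.

Lemma Re_sum m (F : 'I_m -> R[i]) : Re (\sum_(j < m) F j) = \sum_(j < m) Re (F j).
Proof. by apply: (big_morph Re) => // [[x1 y1] [x2 y2]]. Qed.
Lemma Im_sum m (F : 'I_m -> R[i]) : Im (\sum_(j < m) F j) = \sum_(j < m) Im (F j).
Proof. by apply: (big_morph Im) => // [[x1 y1] [x2 y2]]. Qed.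

End Q.

Unset Implicit Arguments.

Theorem theorem3p2 (R : realType) (n : nat) (a : nat -> quat R) :
  (1 <= n)%N ->
  a n <> qzero R ->
  slice_eval n a (qone R) = qone R ->
  (* ||P|| = max_{|q|<=1} |P(q)| = 1 (attained at q = 1 since P(1) = 1) *)
  (forall q : quat R, qnorm q <= 1 -> qnorm (slice_eval n a q) <= 1) ->
  (exists delta : R, 1 < delta /\
     forall Rad : R, 1 < Rad -> Rad < delta ->
       forall q : quat R, qnorm q = Rad ->
         qnorm (slice_eval n a q) <= (1 + Rad ^+ n) / 2) ->
  exists q0 : quat R, slice_eval n a q0 = qzero R /\ 1 <= qnorm q0.
Proof.
move=> hn han hP1 _ [delta [hd hdel]].
pose Ap (f : quat R -> R) : {poly R} := \poly_(j < n.+1) f (a j).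
pose S := Ap (@qre R) * Ap (@qre R) + Ap (@qi R) * Ap (@qi R)
        + Ap (@qj R) * Ap (@qj R) + Ap (@qk R) * Ap (@qk R).
have hAp : forall f (x : R), (Ap f).[x] = \sum_(j < n.+1) f (a j) * x ^+ j.
  move=> f x; rewrite (horner_coef_wide _ (size_poly _ _)).
  by apply: eq_bigr => j _; rewrite coef_poly ltn_ord.
have sq4 : forall x0 x1 x2 x3 : R, 0 <= x0 ^+ 2 + x1 ^+ 2 + x2 ^+ 2 + x3 ^+ 2.
  by move=> *; rewrite !addr_ge0 ?sqr_ge0.
have hreal : forall t : R, qnorm (slice_eval n a (Quat t 0 0 0)) ^+ 2 = S.[t].
  move=> t; rewrite /qnorm sqr_sqrtr //.
  rewrite /slice_eval big_qre big_qi big_qj big_qk /S !hornerD !hornerM !hAp -!expr2.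
  congr (_ ^+ 2 + _ ^+ 2 + _ ^+ 2 + _ ^+ 2); apply: eq_bigr => j _;
    rewrite qpow_real /qmul /=; ring.
have hS1 : S.[1] = 1.
  rewrite -hreal; have -> : Quat (1 : R) 0 0 0 = qone R by [].
  by rewrite hP1 /qnorm /= expr0n /= !addr0 expr1n sqrtr1 expr1n.
have hSd : S^`().[1] <= n%:R.
  apply: (deriv_bound hd hS1) => t ht1 ht2.
  rewrite -hreal.
  have hq : qnorm (Quat t 0 0 0) = t.
    by rewrite /qnorm /= expr0n /= !addr0 sqrtr_sqr ger0_norm // ltW // (lt_trans ltr01).
  have h := hdel t ht1 ht2 _ hq.
  have h0 : 0 <= qnorm (slice_eval n a (Quat t 0 0 0)) by apply: sqrtr_ge0.
  by rewrite !expr2 ler_pM.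
have hcoef : forall f, (Ap f * Ap f)`_(n + n) = f (a n) ^+ 2.
  move=> f; have hno : (n < (n + n).+1)%N by lia.
  rewrite coefM (bigD1 (Ordinal hno)) //= big1 ?addr0.
    by rewrite !coef_poly addKn ltnSn expr2.
  move=> [j hj] hjn; have hjn' : j != n.
    by apply: contra hjn => /eqP e; apply/eqP/val_inj.
  rewrite /= !coef_poly; case: ifP => h1; last by rewrite mul0r.
  case: ifP => h2; last by rewrite mulr0.
  exfalso; move/eqP: hjn'; move: h1 h2; clear; lia.
have hSsz : (n + n < size S)%N.
  rewrite ltnNge; apply/negP => /(nth_default 0); rewrite /S !coefD !hcoef.
  move=> h; apply: han; rewrite (quatE (a n)).
  move: h; case: (a n) => x0 x1 x2 x3 /= h.
  have := sqr_ge0 x0; have := sqr_ge0 x1; have := sqr_ge0 x2; have := sqr_ge0 x3.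
  move=> *.
  have e0 : x0 = 0 by apply: sq0; lra.
  have e1 : x1 = 0 by apply: sq0; lra.
  have e2 : x2 = 0 by apply: sq0; lra.
  have e3 : x3 = 0 by apply: sq0; lra.
  by rewrite e0 e1 e2 e3.
pose toC := real_complex R.
pose S' := map_poly toC S.
have hS'sz : size S' = size S by rewrite size_map_poly.
have [r hr] := closed_field_poly_normal S'.
have S'0 : S' != 0 by rewrite -size_poly_gt0 hS'sz (leq_ltn_trans (leq0n _) hSsz).
have hroot : forall z, root S' z -> z \in r.
  by move=> z; rewrite {1}hr rootZ ?lead_coef_eq0 // root_prod_XsubC.
case: (boolP (has (fun z => 1 <= `|z|) r)) => [/hasP [z zr hz] | hno]; last first.
  exfalso.
  have hlt : forall z, root S' z -> `|z| < 1.
    move=> z /hroot zr; rewrite real_ltNge ?normr_real ?real1 //.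
    by apply: contra hno => h; apply/hasP; exists z.
  have hs : (1 < size S')%N by rewrite hS'sz; lia.
  have := rootsB hs hlt.
  have e1 : S'.[1] = 1 by rewrite -(rmorph1 toC) horner_map hS1.
  have eK : Kq S' = S^`().[1].
    rewrite /Kq deriv_map e1 -(rmorph1 toC) horner_map /= /toC /=.
    by rewrite mulr1 mul0r subr0.
  rewrite eK e1 /nsq /= expr1n expr0n /= addr0 mulr1 hS'sz.
  have : (n + n)%:R <= (size S).-1%:R :> R by rewrite ler_nat; lia.
  rewrite natrD; lra.
have hz0 : root S' z by rewrite hr rootZ ?lead_coef_eq0 // root_prod_XsubC.
have hW : forall f, (map_poly toC (Ap f)).[z] = \sum_(j < n.+1) toC (f (a j)) * z ^+ j.
  move=> f; rewrite (horner_coef_wide _ (_ : size _ <= n.+1)%N); last first.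
    by rewrite size_map_poly size_poly.
  by apply: eq_bigr => j _; rewrite coef_map coef_poly ltn_ord.
pose U f := \sum_(j < n.+1) f (a j) * complex.Re (z ^+ j).
pose V f := \sum_(j < n.+1) f (a j) * complex.Im (z ^+ j).
have hU : forall f, complex.Re ((map_poly toC (Ap f)).[z]) = U f.
  move=> f; rewrite hW Re_sum; apply: eq_bigr => j _.
  by rewrite /toC; case: (z ^+ j) => u v /=; rewrite mul0r subr0.
have hV : forall f, complex.Im ((map_poly toC (Ap f)).[z]) = V f.
  move=> f; rewrite hW Im_sum; apply: eq_bigr => j _.
  by rewrite /toC; case: (z ^+ j) => u v /=; rewrite mul0r addr0.
move: hz0; rewrite /root /S' /S !rmorphD !rmorphM !hornerD !hornerM => /eqP h0.
have hre := congr1 (@complex.Re R) h0; have him := congr1 (@complex.Im R) h0.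
rewrite !Re_add !Re_mul !hU !hV /= in hre.
rewrite !Im_add !Im_mul !hU !hV /= in him.
have hA : U (@qre R) ^+ 2 + U (@qi R) ^+ 2 + U (@qj R) ^+ 2 + U (@qk R) ^+ 2 =
  V (@qre R) ^+ 2 + V (@qi R) ^+ 2 + V (@qj R) ^+ 2 + V (@qk R) ^+ 2.
  rewrite !expr2; lra.
have hB : U (@qre R) * V (@qre R) + U (@qi R) * V (@qi R) + U (@qj R) * V (@qj R)
  + U (@qk R) * V (@qk R) = 0 by lra.
have [I1 [I2 [I3 [hI [e0 [e1 [e2 e3]]]]]]] := quat_solve hA hB.
exists (Quat (complex.Re z) (complex.Im z * I1) (complex.Im z * I2) (complex.Im z * I3)).
split.
  rewrite /slice_eval (quatE (\big[_/_]_(j < n.+1) _)) big_qre big_qi big_qj big_qk.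
  rewrite /qzero; congr Quat.
  - transitivity (\sum_(j < n.+1) (1 * (qre (a j) * complex.Re (z ^+ j))
       + (- I1) * (qi (a j) * complex.Im (z ^+ j)) + (- I2) * (qj (a j) * complex.Im (z ^+ j))
       + (- I3) * (qk (a j) * complex.Im (z ^+ j)))).
      by apply: eq_bigr => j _; rewrite qpow_sphere // /qmul /=; ring.
    rewrite sum4 -[RHS]e0 /U /V; ring.
  - transitivity (\sum_(j < n.+1) (1 * (qi (a j) * complex.Re (z ^+ j))
       + I1 * (qre (a j) * complex.Im (z ^+ j)) + I2 * (qk (a j) * complex.Im (z ^+ j))
       + (- I3) * (qj (a j) * complex.Im (z ^+ j)))).
      by apply: eq_bigr => j _; rewrite qpow_sphere // /qmul /=; ring.
    rewrite sum4 -[RHS]e1 /U /V; ring.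
  - transitivity (\sum_(j < n.+1) (1 * (qj (a j) * complex.Re (z ^+ j))
       + (- I1) * (qk (a j) * complex.Im (z ^+ j)) + I2 * (qre (a j) * complex.Im (z ^+ j))
       + I3 * (qi (a j) * complex.Im (z ^+ j)))).
      by apply: eq_bigr => j _; rewrite qpow_sphere // /qmul /=; ring.
    rewrite sum4 -[RHS]e2 /U /V; ring.
  - transitivity (\sum_(j < n.+1) (1 * (qk (a j) * complex.Re (z ^+ j))
       + I1 * (qj (a j) * complex.Im (z ^+ j)) + (- I2) * (qi (a j) * complex.Im (z ^+ j))
       + I3 * (qre (a j) * complex.Im (z ^+ j)))).
      by apply: eq_bigr => j _; rewrite qpow_sphere // /qmul /=; ring.
    rewrite sum4 -[RHS]e3 /U /V; ring.
rewrite /qnorm /=.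
have -> : complex.Re z ^+ 2 + (complex.Im z * I1) ^+ 2 + (complex.Im z * I2) ^+ 2
   + (complex.Im z * I3) ^+ 2 = complex.Re z ^+ 2 + complex.Im z ^+ 2.
  transitivity (complex.Re z ^+ 2 + complex.Im z ^+ 2 * (I1 ^+ 2 + I2 ^+ 2 + I3 ^+ 2)).
    by ring.
  by rewrite hI mulr1.
move: hz; rewrite normc_def -(rmorph1 toC) /toC.
by rewrite lecR.
Qed.
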